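(* Let $d$ be a distance function on the edges of the complete graph $K_n$ and let $H$ be a Hamiltonian cycle of $K_n$. Then, with probability $\Omega(1)$ (as $n\to\infty$), one application of the edge-based random solution generation with the matrix $\Pi^H$ outputs a Hamiltonian cycle whose cost is not larger than the cost of $H$.
   Context: The cost of a Hamiltonian cycle is the sum of $d$ over its edges. For a Hamiltonian cycle $H$, $\Pi^H=(\pi_{i,j})$ is the symmetric $n\times n$ matrix with $\pi_{i,i}=0$, $\pi_{i,j}=1-\frac1n$ if $\{i,j\}\in H$ and $\pi_{i,j}=\frac{1}{n(n-2)}$ otherwise. Edge-based generation from $\Pi$: start with $B=\emptyset$ and repeatedly add to $B$ an edge $\{i,j\}\notin B$ chosen among the admissible edges with probability proportional to $\pi_{i,j}+\pi_{j,i}$, until $B$ is a Hamiltonian cycle; an edge is admissible if adding it to $B$ creates no vertex of degree $\ge3$ and no cycle with fewer than $n$ edges. *)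

(* Defs.v *)
From HB Require Import structures.
From mathcomp Require Import all_boot all_order all_algebra.
Set Implicit Arguments. Unset Strict Implicit. Unset Printing Implicit Defensive.
Import Order.TTheory GRing.Theory Num.Theory.
Local Open Scope ring_scope.

(* Edges of the complete graph K_n on vertex set 'I_n: 2-element vertex sets. *)
Definition edge (n : nat) := {e : {set 'I_n} | #|e| == 2%N}.
HB.instance Definition _ n := Finite.on (edge n).

Section Graph.
Variable n : nat.
Implicit Types (B C : {set edge n}) (u v : 'I_n).

Definition deg B v : nat := #|[set e in B | v \in val e]|.

Definition adj B : rel 'I_n :=
  fun u v => [exists e in B, (u != v) && (u \in val e) && (v \in val e)].

Definition is_cycle C : bool :=
  [&& C != set0,
      [forall v, (deg C v == 0%N) || (deg C v == 2%N)] &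
      [forall u, forall v, ((deg C u != 0%N) && (deg C v != 0%N)) ==> connect (adj C) u v]].

Definition is_hamcycle C : bool := is_cycle C && [forall v, deg C v == 2%N].

Definition admissible B (e : edge n) : bool :=
  [&& e \notin B,
      [forall v, deg (e |: B) v <= 2]%N &
      [forall C in powerset (e |: B), is_cycle C ==> (n <= #|C|)%N]].

End Graph.

Section Process.
Variables (R : realFieldType) (n : nat).

Definition cost (d : edge n -> R) (B : {set edge n}) : R := \sum_(e in B) d e.

(* the matrix Pi^H, viewed on edges (it is symmetric, pi_{i,j} = pi_{j,i}) *)
Definition piH (H : {set edge n}) (e : edge n) : R :=
  if e \in H then 1 - 1 / n%:R else 1 / (n%:R * (n - 2)%:R).

(* selection weight pi_{i,j} + pi_{j,i} of edge {i,j} *)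
Definition weight (H : {set edge n}) (e : edge n) : R := piH H e + piH H e.

(* Probability that the edge-based generation with matrix Pi^H, started from
   the current edge set B and with at most [fuel] further steps, terminates
   with a Hamiltonian cycle whose cost is <= cost of H. *)
Fixpoint succ_prob (d : edge n -> R) (H : {set edge n}) (fuel : nat)
    (B : {set edge n}) : R :=
  if is_hamcycle B then (if cost d B <= cost d H then 1 else 0) else
  match fuel with
  | 0%N => 0
  | f.+1 =>
    let A := [set e | admissible B e] in
    \sum_(e in A) (weight H e / \sum_(e' in A) weight H e') * succ_prob d H f (e |: B)
  end.

(* probability of the event for one run started from B = emptyset;
   a run adds exactly n edges, so fuel n suffices. *)
Definition gen_success_prob (d : edge n -> R) (H : {set edge n}) : R :=
  succ_prob d H n set0.

End Process.

(* Main.v *)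
Require Import Defs.
From HB Require Import structures.
From mathcomp Require Import all_boot all_order all_algebra.
From mathcomp Require Import zify ring lra.
Set Implicit Arguments. Unset Strict Implicit. Unset Printing Implicit Defensive.
Import Order.TTheory GRing.Theory Num.Theory.

Section Comb.
Variable n : nat.
Implicit Types (B C H : {set edge n}) (u v : 'I_n) (e : edge n).

Lemma card_edge e : #|val e| = 2.
Proof. by case: e => x /= /eqP. Qed.

Lemma edge_pick e : exists v, v \in val e.
Proof.
have : (0 < #|val e|)%N by rewrite card_edge.
by rewrite card_gt0 => /set0Pn.
Qed.

Lemma deg_sub B C v : B \subset C -> (deg B v <= deg C v)%N.
Proof.
move=> sBC; apply: subset_leq_card; apply/subsetP => e.
by rewrite !inE => /andP[eB ->]; rewrite (subsetP sBC).
Qed.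

Lemma deg_eq2 B C v e : B \subset C -> deg B v = 2 -> deg C v = 2 ->
  e \in C -> v \in val e -> e \in B.
Proof.
move=> sBC dB dC eC ve.
have : [set f in B | v \in val f] == [set f in C | v \in val f].
  rewrite eqEcard; apply/andP; split.
    apply/subsetP => f; rewrite !inE => /andP[fB ->]; by rewrite (subsetP sBC).
  by move: dB dC; rewrite /deg => -> ->.
move/eqP => E.
have : e \in [set f in C | v \in val f] by rewrite inE eC ve.
by rewrite -E inE => /andP[].
Qed.

Lemma deg_ge1 B v e : e \in B -> v \in val e -> (0 < deg B v)%N.
Proof. move=> eB ve; rewrite card_gt0; apply/set0Pn; exists e; by rewrite inE eB ve. Qed.

Lemma cycle_sub_ham C H : is_hamcycle H -> C \subset H -> is_cycle C -> C = H.
Proof.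
case/andP=> /and3P[_ _ /forallP conH] /forallP degH sCH /and3P[C0 /forallP degC _].
have dH v : deg H v = 2 by apply/eqP.
have dC v : (0 < deg C v)%N -> deg C v = 2.
  by move=> p; case/orP: (degC v) => /eqP // E; rewrite E in p.
have cl : closed (adj H) [pred v | deg C v == 2].
  have aux x y : adj H x y -> deg C x = 2 -> deg C y = 2.
    case/existsP => e /andP[eH /andP[/andP[_ xe] ye]] dx.
    apply: dC; apply: (deg_ge1 (e:=e)) => //.
    exact: (deg_eq2 sCH dx (dH x) eH xe).
  have sym x y : adj H x y -> adj H y x.
    case/existsP => e /andP[eH /andP[/andP[xy xe] ye]].
    by apply/existsP; exists e; rewrite eH eq_sym xy xe ye.
  move=> x y a; rewrite !inE; apply/eqP/eqP; [exact: aux| exact: aux (sym _ _ a)].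
case/set0Pn: C0 => e0 e0C; case: (edge_pick e0) => v0 v0e.
have dv0 : deg C v0 = 2 by apply: dC; exact: deg_ge1 e0C v0e.
have all2 v : deg C v = 2.
  have c : connect (adj H) v0 v.
    by move: (conH v0) => /forallP /(_ v) /implyP; apply; rewrite !dH.
  by move: (closed_connect cl c); rewrite !inE dv0 eqxx => /esym/eqP.
apply/eqP; rewrite eqEsubset sCH /=; apply/subsetP => e eH.
case: (edge_pick e) => v ve; exact: (deg_eq2 sCH (all2 v) (dH v) eH ve).
Qed.

Lemma handshake H : (forall v, deg H v = 2) -> #|H| = n.
Proof.
move=> dH.
have E1 : (\sum_(v : 'I_n) deg H v = n * 2)%N by rewrite (eq_bigr (fun _ => 2%N)) // sum_nat_const card_ord.
have E2 : (\sum_(v : 'I_n) deg H v = \sum_(e in H) \sum_(v : 'I_n) (v \in val e))%N.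
  rewrite (exchange_big_dep xpredT) //=; apply: eq_bigr => v _.
  rewrite /deg -sum1_card big_mkcond /= [RHS]big_mkcond /=; apply: eq_bigr => e _.
  by rewrite inE; case: (e \in H); case: (v \in val e).
have E3 : (\sum_(e in H) \sum_(v : 'I_n) (v \in val e) = #|H| * 2)%N.
  rewrite -sum_nat_const; apply: eq_bigr => e _.
  by rewrite -[in RHS](card_edge e) -sum1_card [RHS]big_mkcond.
by apply/eqP; rewrite -(eqn_pmul2r (isT : (0 < 2)%N)) -E3 -E2 E1.
Qed.


Lemma card_bigcup_le (I : finType) (P : pred I) (F : I -> {set 'I_n}) :
  (#|\bigcup_(i | P i) F i| <= \sum_(i | P i) #|F i|)%N.
Proof.
elim/big_rec2: _ => [|i k A _ h]; first by rewrite cards0.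
apply: leq_trans (leq_add (leqnn _) h).
by case: (leq_card_setU (F i) A).
Qed.

Lemma ham_deg H v : is_hamcycle H -> deg H v = 2.
Proof. by case/andP=> _ /forallP /(_ v) /eqP. Qed.

Lemma ham_card H : is_hamcycle H -> #|H| = n.
Proof. by move=> h; apply: handshake => v; exact: ham_deg. Qed.

Lemma adm_H H B e : is_hamcycle H -> B \subset H -> e \in H -> e \notin B ->
  admissible B e.
Proof.
move=> hH sBH eH eB.
have sEH : e |: B \subset H by rewrite subUset sub1set eH sBH.
rewrite /admissible eB /=; apply/andP; split.
  by apply/forallP => v; rewrite -(ham_deg v hH); exact: deg_sub.
apply/forallP => C; apply/implyP; rewrite inE => sC; apply/implyP => cC.
by rewrite (cycle_sub_ham hH (subset_trans sC sEH) cC) (ham_card hH).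
Qed.

Lemma not_ham H B : is_hamcycle H -> B \subset H -> B != H -> ~~ is_hamcycle B.
Proof.
move=> hH sBH nBH.
have [e /andP[eH eB]] : exists e, (e \in H) && (e \notin B).
  apply/existsP; move: nBH; apply: contraR; rewrite negb_exists => /forallP al.
  rewrite eqEsubset sBH; apply/subsetP => e eH; move: (al e); by rewrite eH /= negbK.
case: (edge_pick e) => v ve.
apply/negP => /(ham_deg v) dB.
by move: (deg_eq2 sBH dB (ham_deg v hH) eH ve); rewrite (negbTE eB).
Qed.

Lemma adm_notin B e : admissible B e -> e \notin B.
Proof. by case/and3P. Qed.

Lemma adm_deg B e v : admissible B e -> v \in val e -> (deg B v < 2)%N.
Proof.
case/and3P=> eB /forallP /(_ v) dg _ ve.
suff : deg (e |: B) v = (deg B v).+1 by move=> E; rewrite E in dg.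
rewrite /deg.
have -> : [set f in e |: B | v \in val f] = e |: [set f in B | v \in val f].
  apply/setP => f; rewrite !inE; case: eqP => [-> | _] //=; by rewrite ve.
by rewrite cardsU1 inE (negbTE eB).
Qed.

Lemma count_bound H B : is_hamcycle H -> B \subset H ->
  (#|[set e | admissible B e] :\: H| <= n * #|H :\: B|)%N.
Proof.
move=> hH sBH.
set S := [set v | (deg B v < 2)%N].
have S1 : (#|S| <= 2 * #|H :\: B|)%N.
  have sub : S \subset \bigcup_(e in H :\: B) val e.
    apply/subsetP => v; rewrite inE => dv.
    have [e /andP[eH /andP[eB ve]]] : exists e, (e \in H) && ((e \notin B) && (v \in val e)).
      apply/existsP; apply: contraT; rewrite negb_exists => /forallP al.
      have : [set f in H | v \in val f] \subset [set f in B | v \in val f].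
        apply/subsetP => f; rewrite !inE => /andP[fH fv]; move: (al f).
        by rewrite fH fv /= andbT negbK => ->.
      move/subset_leq_card; rewrite -/(deg H v) -/(deg B v) (ham_deg v hH).
      by rewrite leqNgt dv.
    by apply/bigcupP; exists e => //; rewrite inE eH eB.
  apply: leq_trans (subset_leq_card sub) _.
  apply: leq_trans (card_bigcup_le _ _) _.
  rewrite (eq_bigr (fun _ => 2%N)) => [|e _]; last by rewrite card_edge.
  by rewrite sum_nat_const mulnC.
have S2 : (#|S| <= n)%N by apply: leq_trans (max_card _) _; rewrite card_ord.
have C1 : (#|[set e | admissible B e] :\: H| <= 'C(#|S|, 2))%N.
  rewrite -cards_draws -(card_imset _ val_inj); apply: subset_leq_card.
  apply/subsetP => X /imsetP [e]; rewrite !inE => /andP[_ ae] ->.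
  rewrite card_edge eqxx andbT; apply/subsetP => v ve; rewrite inE.
  exact: adm_deg ae ve.
apply: leq_trans C1 _; rewrite bin2 leq_half_double.
set L := #|S|; set m := #|H :\: B|.
have : (L * L.-1 <= L * L)%N by rewrite leq_mul2l leq_pred orbT.
have : (L * L <= n * (2 * m))%N by apply: leq_mul.
lia.
Qed.

Lemma adm_capH H B : is_hamcycle H -> B \subset H ->
  [set e | admissible B e] :&: H = H :\: B.
Proof.
move=> hH sBH; apply/setP => e; rewrite !inE.
case eH: (e \in H); rewrite ?andbF ?andbT //=.
case eB: (e \in B) => /=.
  by apply/negP => /adm_notin /negP; apply.
by apply: (adm_H hH sBH eH); exact: negbT.
Qed.

End Comb.

Local Open Scope ring_scope.

Section Num.
Variable R : realFieldType.

Lemma ratio_bound (a b x : R) : 0 < a -> 0 <= b -> 0 <= x -> b <= x * a ->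
  1 - x <= a / (a + b).
Proof.
move=> a0 b0 x0 bxa.
have ab : 0 < a + b by lra.
rewrite ler_pdivlMr //; nra.
Qed.

Lemma bernoulli (x : R) (k : nat) : 0 <= x -> x <= 1 -> 1 - k%:R * x <= (1 - x) ^+ k.
Proof.
move=> x0 x1; elim: k => [|k IH]; first by rewrite expr0 mul0r subr0.
rewrite exprSr -natr1.
have h : (1 - k%:R * x) * (1 - x) <= (1 - x) ^+ k * (1 - x) by apply: ler_wpM2r; lra.
have k0 : 0 <= k%:R :> R by apply: ler0n.
nra.
Qed.

Lemma final_bound (n : nat) : (11 <= n)%N ->
  1 / 16 <= (1 - n%:R / ((n%:R - 1) * (n%:R - 2))) ^+ n :> R.
Proof.
move=> hn.
set N := n%:R : R.
have N11 : 11 <= N by rewrite /N (ler_nat R 11 n).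
set D := (N - 1) * (N - 2).
have D0 : 0 < D by rewrite /D; nra.
set x := N / D.
have x0 : 0 <= x by rewrite /x divr_ge0 //; lra.
have half k : (k.*2 <= n.+1)%N -> 1 / 4 <= 1 - k%:R * x.
  move=> hk.
  have hk' : 2 * k%:R <= N + 1 :> R.
    have := hk; rewrite -(ler_nat R) -mul2n natrM -natr1 /N => h; lra.
  have k0 : 0 <= k%:R :> R by apply: ler0n.
  have : k%:R * x <= 3 / 4.
    rewrite /x mulrA ler_pdivrMr // /D; nra.
  lra.
have x1 : x <= 1.
  have : (1.*2 <= n.+1)%N by lia.
  move=> /half; lra.
have hA := half (n./2) _; have hB := half (n - n./2)%N _.
have E := odd_double_half n.
have e1 : (n./2.*2 <= n.+1)%N by case: (odd n) E => /= E; lia.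
have e2 : ((n - n./2).*2 <= n.+1)%N by case: (odd n) E => /= E; lia.
move: (hA e1) (hB e2) => {}hA {}hB.
have -> : n = (n./2 + (n - n./2))%N by case: (odd n) E => /= E; lia.
rewrite exprD.
have b1 := bernoulli (n./2) x0 x1.
have b2 := bernoulli (n - n./2) x0 x1.
have : 1/4 * (1/4) <= (1 - x) ^+ n./2 * (1 - x) ^+ (n - n./2).
  apply: ler_pM; lra.
lra.
Qed.

End Num.

Section Prob.
Variables (R : realFieldType) (n : nat) (d : edge n -> R) (H : {set edge n}).
Hypotheses (hn : (11 <= n)%N) (hH : is_hamcycle H).

Let N : R := n%:R.
Let wH : R := (1 - 1 / N) + (1 - 1 / N).
Let wO : R := 1 / (N * (n - 2)%:R) + 1 / (N * (n - 2)%:R).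
Let x : R := N / ((N - 1) * (N - 2)).

Lemma N11 : 11 <= N.
Proof. by rewrite /N (ler_nat R 11 n). Qed.

Lemma n2E : (n - 2)%:R = N - 2 :> R.
Proof. by rewrite natrB ?(leq_trans _ hn). Qed.

Lemma wH_pos : 0 < wH.
Proof.
have h := N11.
have : 1 / N < 1 by rewrite ltr_pdivrMr; lra.
rewrite /wH; lra.
Qed.

Lemma wO_ge0 : 0 <= wO.
Proof. have h := N11. rewrite /wO n2E; apply: addr_ge0; apply: divr_ge0; nra. Qed.

Lemma x_ge0 : 0 <= x.
Proof. have h := N11. rewrite /x; apply: divr_ge0; nra. Qed.

Lemma xwH : x * wH = N * wO.
Proof.
have h := N11. rewrite /x /wH /wO n2E.
have h1 : N != 0 by apply/eqP; lra.
have h2 : N - 1 != 0 by apply/eqP; lra.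
have h3 : N - 2 != 0 by apply/eqP; lra.
field; rewrite ?h1 ?h2 ?h3 //.
Qed.

Lemma weightH e : e \in H -> weight R H e = wH.
Proof. by move=> eH; rewrite /weight /piH eH. Qed.

Lemma weightO e : e \notin H -> weight R H e = wO.
Proof. by move=> eH; rewrite /weight /piH (negbTE eH). Qed.

Lemma weight_ge0 e : 0 <= weight R H e.
Proof.
case eH: (e \in H); first by rewrite weightH // ltW // wH_pos.
by rewrite weightO ?eH //; exact: wO_ge0.
Qed.

Lemma sp_ge0 f B : 0 <= succ_prob d H f B.
Proof.
elim: f B => [|f IH] B /=.
  by case: ifP => _ //; case: ifP.
case: ifP => _; first by case: ifP.
apply: sumr_ge0 => e _; apply: mulr_ge0 => //.
apply: divr_ge0; first exact: weight_ge0.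
by apply: sumr_ge0 => ? _; exact: weight_ge0.
Qed.


Lemma x_le1 : 1 - x >= 0.
Proof.
have h := N11.
have : x <= 1 by rewrite /x ler_pdivrMr; nra.
lra.
Qed.

Lemma main (m : nat) : forall B : {set edge n}, B \subset H -> #|H :\: B| = m ->
  (1 - x) ^+ m <= succ_prob d H m B.
Proof.
elim: m => [|m IH] B sBH cm.
  have -> : B = H.
    apply/eqP; rewrite eqEsubset sBH /=; apply/subsetP => e eH; apply: contraT => eB.
    have : (0 < #|H :\: B|)%N by rewrite card_gt0; apply/set0Pn; exists e; rewrite inE eH eB.
    by rewrite cm.
  by rewrite /= hH lexx expr0.
have nBH : B != H by apply/eqP => E; move: cm; rewrite E setDv cards0.
rewrite /= (negbTE (not_ham hH sBH nBH)).
set A := [set e0 | admissible B e0].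
set W := \sum_(e' in A) weight R H e'.
have capE e : (e \in A) && (e \in H) = (e \in H :\: B).
  by rewrite -(adm_capH hH sBH) !inE.
have difE e : (e \in A) && (e \notin H) = (e \in A :\: H).
  by rewrite !inE andbC.
set k := #|A :\: H|.
have WE : W = wH *+ m.+1 + wO *+ k.
  rewrite /W (bigID (fun e => e \in H)) /=; congr (_ + _).
    rewrite (eq_bigl (fun e => e \in H :\: B)) => [|e]; last exact: capE.
    rewrite (eq_bigr (fun _ => wH)) => [|e]; last by rewrite inE => /andP[_ eH]; rewrite weightH.
    by rewrite sumr_const cm.
  rewrite (eq_bigl (fun e => e \in A :\: H)) => [|e]; last exact: difE.
  rewrite (eq_bigr (fun _ => wO)) => [|e]; last by rewrite inE => /andP[eH _]; rewrite weightO.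
  by rewrite sumr_const.
have Q0 : 0 <= (1 - x) ^+ m by apply: exprn_ge0; exact: x_le1.
have W0 : 0 < W.
  rewrite WE; have := wH_pos; have := wO_ge0 => h1 h2.
  by apply: ltr_wpDr; [apply: mulrn_wge0 | rewrite pmulrn_lgt0].
set F := fun e => weight R H e / W * succ_prob d H m (e |: B).
have F0 e : 0 <= F e.
  by apply: mulr_ge0; [apply: divr_ge0; [exact: weight_ge0 | exact: ltW] | exact: sp_ge0].
rewrite (bigID (fun e => e \in H)) /=.
rewrite -[X in X <= _]addr0; apply: lerD; last by apply: sumr_ge0 => e _; exact: F0.
rewrite (eq_bigl (fun e => e \in H :\: B)) => [|e]; last exact: capE.
have step : \sum_(e in H :\: B) (wH / W * (1 - x) ^+ m) <= \sum_(e in H :\: B) F e.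
  apply: ler_sum => e; rewrite inE => /andP[eB eH].
  rewrite /F weightH //; apply: ler_wpM2l.
    by apply: divr_ge0; [exact: ltW wH_pos | exact: ltW].
  apply: IH; first by rewrite subUset sub1set eH sBH.
  move: (cardsD1 e (H :\: B)); rewrite cm inE eH eB /= add1n setDDl.
  by rewrite [[set e] :|: B]setUC => -[->].
apply: le_trans step; rewrite sumr_const cm exprSr mulrC -mulr_natl mulrA.
apply: ler_wpM2r => //.
have -> : m.+1%:R * (wH / W) = (wH *+ m.+1) / (wH *+ m.+1 + wO *+ k).
  by rewrite -WE mulrA mulr_natl.
apply: ratio_bound.
- by rewrite pmulrn_lgt0 // wH_pos.
- by apply: mulrn_wge0; exact: wO_ge0.
- exact: x_ge0.
have kb : (k <= n * m.+1)%N by rewrite /k -cm; exact: count_bound.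
rewrite mulrnAr xwH /N mulr_natl -mulrnA -[wO *+ k]mulr_natl -[wO *+ (n * m.+1)]mulr_natl.
apply: ler_wpM2r; first exact: wO_ge0.
by rewrite ler_nat.
Qed.


Lemma final_sec : 1 / 16 <= gen_success_prob d H.
Proof.
apply: le_trans (final_bound R hn) _.
rewrite /gen_success_prob; apply: main => //; first exact: sub0set.
by rewrite setD0 (ham_card hH).
Qed.

End Prob.

Theorem claim5 (R : realFieldType) :
  exists (c : R) (N : nat), 0 < c /\
    forall (n : nat), (N <= n)%N ->
    forall (d : edge n -> R) (H : {set edge n}),
      is_hamcycle H -> c <= gen_success_prob d H.
Proof.
exists (1 / 16), 11%N; split; first by rewrite divr_gt0.
move=> n hn d H hH; exact: final_sec.
Qed.
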